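(* Fix $(u_\pm,v_\pm)$ with $v_\pm>0$ and $u_->u_+$. For $\epsilon_1,\epsilon_2>0$ let $(u_*^{\epsilon_1\epsilon_2},v_*^{\epsilon_1\epsilon_2})$ be the intermediate state of the two-shock Riemann solution of the perturbed Brio system with data $(u_\pm,v_\pm)$. Then $\lim_{\epsilon_1,\epsilon_2\to0}v_*^{\epsilon_1\epsilon_2}=+\infty$.
   Context: Perturbed Brio system: $u_t+(\tfrac12u^2+\tfrac12\epsilon_1v^2)_x=0$, $v_t+(uv-\epsilon_2v)_x=0$, $\epsilon_1,\epsilon_2>0$, $v>0$, with Riemann data $(u,v)(0,x)=(u_-,v_-)$ for $x<0$, $(u_+,v_+)$ for $x>0$. A two-shock Riemann solution is one with an intermediate state $(u_*,v_* )$, $v_*>\max(v_-,v_+)$, $u_+<u_*<u_-$, such that $$u_*=u_-+(v_*-v_-)\frac{\epsilon_2-\sqrt{\epsilon_2^2+4\epsilon_1(v_*+v_-)^2}}{v_*+v_-},\qquad u_+=u_*+(v_+-v_* )\frac{\epsilon_2+\sqrt{\epsilon_2^2+4\epsilon_1(v_*+v_+)^2}}{v_*+v_+},$$ with shock speeds $\sigma_1=u_-+\frac{v_*(u_*-u_-)}{v_*-v_-}-\epsilon_2$ and $\sigma_2=u_++\frac{v_*(u_+-u_* )}{v_+-v_*}-\epsilon_2$; the solution equals $(u_-,v_-)$ for $x/t<\sigma_1$, $(u_*,v_* )$ for $\sigma_1<x/t<\sigma_2$, $(u_+,v_+)$ for $x/t>\sigma_2$. The limit $\epsilon_1,\epsilon_2\to0$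 is taken over parameters for which this two-shock solution exists. *)

(* Defs.v *)
From Stdlib Require Import Reals.
Open Scope R_scope.

(* (us, vs) is the intermediate state of a two-shock Riemann solution of the
   perturbed Brio system with parameters e1, e2 and Riemann data
   (um, vm) (left, x<0) and (up, vp) (right, x>0). *)
Definition two_shock_state (e1 e2 um vm up vp us vs : R) : Prop :=
  vs > Rmax vm vp /\
  up < us < um /\
  us = um + (vs - vm) * (e2 - sqrt (e2 ^ 2 + 4 * e1 * (vs + vm) ^ 2)) / (vs + vm) /\
  up = us + (vp - vs) * (e2 + sqrt (e2 ^ 2 + 4 * e1 * (vs + vp) ^ 2)) / (vs + vp).

(* Main.v *)
Require Import Defs.
From Stdlib Require Import Reals Lra Psatz.
Open Scope R_scope.

Lemma sqrt_bound (e t w : R) : 0 <= e -> 0 <= t -> 0 <= w ->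
  sqrt (e ^ 2 + 4 * t ^ 2 * w ^ 2) <= e + 2 * t * w.
Proof.
  intros. rewrite <- (sqrt_pow2 (e + 2*t*w)) by (apply Rplus_le_le_0_compat; [lra| apply Rmult_le_pos; [lra|lra]]).
  apply sqrt_le_1_alt. assert (0 <= e*(t*w)) by (apply Rmult_le_pos; [lra|apply Rmult_le_pos; lra]). nra.
Qed.

Theorem lemma5p1 (um vm up vp : R) (hvm : 0 < vm) (hvp : 0 < vp) (hu : up < um) :
  forall M : R, exists delta : R, 0 < delta /\
    forall e1 e2 us vs : R,
      0 < e1 < delta -> 0 < e2 < delta ->
      two_shock_state e1 e2 um vm up vp us vs ->
      M < vs.
Proof.
  intro M. set (K := Rmax M 1). set (D := um - up).
  assert (HK : 1 <= K) by apply Rmax_r.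
  assert (HMK : M <= K) by apply Rmax_l.
  assert (HD : 0 < D) by (unfold D; lra).
  exists (Rmin (D/8) (D^2/(64*K^2))). split.
  { apply Rmin_glb_lt. lra. apply Rdiv_lt_0_compat; nra. }
  intros e1 e2 us vs He1 He2 [Hv [Hus [E1 E2]]].
  assert (Hd1 : Rmin (D/8) (D^2/(64*K^2)) <= D/8) by apply Rmin_l.
  assert (Hd2 : Rmin (D/8) (D^2/(64*K^2)) <= D^2/(64*K^2)) by apply Rmin_r.
  assert (Hvm : vm <= Rmax vm vp) by apply Rmax_l.
  assert (Hvp : vp <= Rmax vm vp) by apply Rmax_r.
  destruct (Rlt_or_le M vs) as [H|H]; [exact H|exfalso].
  set (t := sqrt e1).
  assert (Ht0 : 0 <= t) by apply sqrt_pos.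
  assert (Ht2 : t ^ 2 = e1) by (unfold t; simpl; rewrite Rmult_1_r; apply sqrt_sqrt; lra).
  assert (HtK : e1 * (64 * K^2) < D^2).
  { assert (e1 < D^2/(64*K^2)) by lra.
    apply (Rmult_lt_compat_r (64*K^2)) in H0; [|nra].
    unfold Rdiv in H0. rewrite Rmult_assoc, Rinv_l in H0 by nra. lra. }
  assert (Ht : 8 * t * K < D) by nra.
  set (S1 := sqrt (e2 ^ 2 + 4 * e1 * (vs + vm) ^ 2)).
  set (S2 := sqrt (e2 ^ 2 + 4 * e1 * (vs + vp) ^ 2)).
  assert (HS1 : S1 <= e2 + 2 * t * (vs + vm)).
  { unfold S1. rewrite <- Ht2. replace (4 * t^2 * (vs+vm)^2) with (4*t^2*(vs+vm)^2) by ring.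
    apply sqrt_bound; lra. }
  assert (HS2 : S2 <= e2 + 2 * t * (vs + vp)).
  { unfold S2. rewrite <- Ht2. apply sqrt_bound; lra. }
  assert (HS1p : 0 <= S1) by apply sqrt_pos.
  assert (HS2p : 0 <= S2) by apply sqrt_pos.
  fold S1 in E1. fold S2 in E2.
  assert (A1 : (um - us) * (vs + vm) = (vs - vm) * (S1 - e2)).
  { rewrite E1. field. lra. }
  assert (A2 : (us - up) * (vs + vp) = (vs - vp) * (e2 + S2)).
  { rewrite E2. field. lra. }
  assert (B1 : um - us <= 2 * t * vs).
  { assert (P1 : (vs - vm) * (S1 - e2) <= (vs - vm) * (2 * t * (vs + vm)))
      by (apply Rmult_le_compat_l; lra).
    assert (P2 : 0 <= t * vm * (vs + vm)) by (apply Rmult_le_pos; [apply Rmult_le_pos|]; lra).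
    assert ((um - us) * (vs + vm) <= (2 * t * vs) * (vs + vm)) by nra.
    apply (Rmult_le_reg_r (vs + vm)); lra. }
  assert (B2 : us - up <= 2 * e2 + 2 * t * vs).
  { assert (P1 : (vs - vp) * (e2 + S2) <= (vs - vp) * (2 * e2 + 2 * t * (vs + vp)))
      by (apply Rmult_le_compat_l; lra).
    assert (P2 : 0 <= t * vp * (vs + vp)) by (apply Rmult_le_pos; [apply Rmult_le_pos|]; lra).
    assert (P3 : 0 <= e2 * vp) by (apply Rmult_le_pos; lra).
    assert ((us - up) * (vs + vp) <= (2 * e2 + 2 * t * vs) * (vs + vp)) by nra.
    apply (Rmult_le_reg_r (vs + vp)); lra. }
  assert (t * vs <= t * K) by nra.
  unfold D in *. lra.
Qed.
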